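(* Let $N\ge2$, $M=2^N$, and let $\mathcal{A}=\{a_0,\dots,a_{M-1}\}$ be a Gray-labelled rectangular $M$-QAM constellation (defined in the context), with $N_I=\lceil N/2\rceil$ in-phase bit positions $\mathcal{N}_I=\{0,\dots,N_I-1\}$ and quadrature bit positions $\mathcal{N}_Q=\{N_I,\dots,N-1\}$. For $y,h\in\mathbb{C}$ let $d_i=|y-ha_i|^2$ and let $f=\sum_{S}\bar d_S\prod_{n\in S}z_n$ be the associated pseudo-Boolean function. Then: (1) for every $S\subseteq\{0,\dots,N-1\}$ with $S\cap\mathcal{N}_I\neq\emptyset$ and $S\cap\mathcal{N}_Q\neq\emptyset$, one has $\bar d_S=0$ for all $y,h\in\mathbb{C}$; (2) the degree of $f$, i.e. the largest $|S|$ such that $\bar d_S$ is not identically zero as a function of $(y,h)\in\mathbb{C}^2$, equals $N_I=\lceil N/2\rceil$.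
   Context: For $i\in\{0,\dots,M-1\}$ write its $N$-bit binary representation as $b_0(i)\cdots b_{N-1}(i)$ with $b_0$ the most significant bit. Given $d_0,\dots,d_{M-1}$, define $f(z_0,\dots,z_{N-1})=\sum_{i}d_i\prod_{n=0}^{N-1}B_{i,n}(z_n)$, $z_n\in\{0,1\}$, with $B_{i,n}(z)=z$ if $b_n(i)=1$ and $1-z$ if $b_n(i)=0$; its multilinear expansion is $f=\sum_{S\subseteq\{0,\dots,N-1\}}\bar d_S\prod_{n\in S}z_n$ with $\bar d_S=\sum_{i:\,b_n(i)=0\ \forall n\notin S}d_i\prod_{n\in S}(-1)^{1-b_n(i)}$. Gray-labelled rectangular $M$-QAM: let $N_Q=\lfloor N/2\rfloor$. Let $g_I:\{0,\dots,2^{N_I}-1\}\to\{0,1\}^{N_I}$ and $g_Q:\{0,\dots,2^{N_Q}-1\}\to\{0,1\}^{N_Q}$ be bijections such that consecutive values $g_I(u),g_I(u+1)$ differ in exactly one coordinate, and likewise for $g_Q$. With $c>0$ set $x_u=c(2u+1-2^{N_I})$, $y_v=c(2v+1-2^{N_Q})$. The point $a_i$ whose in-phase bits $b_0(i)\cdots b_{N_I-1}(i)$ equal $g_I(u)$ and whose quadrature bits $b_{N_I}(i)\cdots b_{N-1}(i)$ equal $g_Q(v)$ is $a_i=x_u+j\,y_v$ ($j=\sqrt{-1}$). *)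

(* Defs.v *)
From HB Require Import structures.
From mathcomp Require Import all_boot all_order all_algebra.
Set Implicit Arguments. Unset Strict Implicit. Unset Printing Implicit Defensive.
Import Order.TTheory GRing.Theory Num.Theory.
Local Open Scope ring_scope.

Definition NQ (N : nat) : nat := N./2.
Definition NI (N : nat) : nat := (N - N./2)%N.

(* b_n(i): the n-th bit of the N-bit binary representation of i,
   b_0 being the most significant bit. *)
Definition bitn (N n i : nat) : bool := odd (i %/ 2 ^ (N.-1 - n)).

Definition ibits (N : nat) (i : nat) : {ffun 'I_(NI N) -> bool} :=
  [ffun k : 'I_(NI N) => bitn N k i].
Definition qbits (N : nat) (i : nat) : {ffun 'I_(NQ N) -> bool} :=
  [ffun k : 'I_(NQ N) => bitn N (NI N + k) i].

Definition gray_labelling (K : nat) (g : 'I_(2 ^ K) -> {ffun 'I_K -> bool}) : Prop :=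
  bijective g /\
  forall u v : 'I_(2 ^ K), val v = (val u).+1 ->
    #|[set k : 'I_K | g u k != g v k]| = 1%N.

Definition dbar (C : nzRingType) (N : nat) (d : 'I_(2 ^ N) -> C) (S : {set 'I_N}) : C :=
  \sum_(i : 'I_(2 ^ N) | [forall n : 'I_N, (n \notin S) ==> ~~ bitn N n i])
     d i * \prod_(n in S) (if bitn N n i then 1 else -1).

Definition dist2 (C : numClosedFieldType) (N : nat) (a : 'I_(2 ^ N) -> C) (y h : C)
  : 'I_(2 ^ N) -> C := fun i => `|y - h * a i| ^+ 2.

(* Main.v *)
Require Import Defs.
From HB Require Import structures.
From mathcomp Require Import all_boot all_order all_algebra.
From mathcomp Require Import zify ring lra.
Import Order.TTheory GRing.Theory Num.Theory.
Set Implicit Arguments. Unset Strict Implicit.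
Local Open Scope ring_scope.

Lemma bits_inj (K : nat) : forall i j, (i < 2 ^ K)%N -> (j < 2 ^ K)%N ->
  (forall k, (k < K)%N -> odd (i %/ 2 ^ k) = odd (j %/ 2 ^ k)) -> i = j.
Proof.
elim: K => [|K IH] i j hi hj hb.
  by move: hi hj; rewrite expn0 !ltnS !leqn0 => /eqP -> /eqP ->.
have h0 := hb 0%N isT; rewrite !expn0 !divn1 in h0.
have e : i./2 = j./2.
  apply: IH.
  - by rewrite -divn2 ltn_divLR // -expnSr.
  - by rewrite -divn2 ltn_divLR // -expnSr.
  move=> k hk; have := hb k.+1 hk.
  by rewrite expnS !divnMA !divn2.
by rewrite -[i]odd_double_half -[j]odd_double_half e h0.
Qed.

Definition Bv (N : nat) (i : 'I_(2 ^ N)) : {ffun 'I_N -> bool} :=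
  [ffun n : 'I_N => bitn N n i].

Lemma Bv_inj N : injective (@Bv N).
Proof.
move=> i j /ffunP e; apply: val_inj; apply: (@bits_inj N); rewrite ?ltn_ord // => k hk.
have hn : (N.-1 - k < N)%N by lia.
have := e (Ordinal hn); rewrite !ffunE /bitn /=.
by have -> : (N.-1 - (N.-1 - k) = k)%N by lia.
Qed.

Lemma Bv_bij N : bijective (@Bv N).
Proof.
apply: inj_card_bij; first exact: Bv_inj.
by rewrite card_ffun card_bool !card_ord.
Qed.

Definition sgn (C : nzRingType) (b : bool) : C := if b then 1 else -1.
Definition flip N (n : 'I_N) (b : {ffun 'I_N -> bool}) : {ffun 'I_N -> bool} :=
  [ffun m => if m == n then ~~ b m else b m].
Definition cond N (S : {set 'I_N}) (b : {ffun 'I_N -> bool}) : bool :=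
  [forall m, (m \notin S) ==> ~~ b m].

Lemma flipK N n : involutive (@flip N n).
Proof. by move=> b; apply/ffunP => m; rewrite !ffunE; case: eqP => // ->; rewrite negbK. Qed.

Lemma vanish (C : numFieldType) N (S : {set 'I_N}) (D : {ffun 'I_N -> bool} -> C) n :
  n \in S -> (forall b, D (flip n b) = D b) ->
  \sum_(b | cond S b) D b * \prod_(m in S) sgn C (b m) = 0.
Proof.
move=> nS hD.
set s := (X in X = 0).
have hs : s = - s.
  rewrite {1}/s (reindex_inj (can_inj (flipK n))) /= -sumrN.
  apply: eq_big => b.
    apply/forallP/forallP => h m; have := h m; rewrite /flip ffunE;
      case: eqP => // ->; by rewrite nS.
  move=> _; rewrite hD (bigD1 n) //= [in RHS](bigD1 n) //= /flip ffunE eqxx.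
  rewrite (eq_bigr (fun m => sgn C (b m))); last by move=> m /andP[_ /negbTE]; rewrite ffunE => ->.
  by rewrite /sgn; case: (b n) => /=; ring.
have : s *+ 2 = 0 by rewrite mulr2n {1}hs addNr.
by move/eqP; rewrite mulrn_eq0 /= => /eqP.
Qed.

Definition par (C : nzRingType) K (f : {ffun 'I_K -> bool}) : C := \prod_k sgn C (f k).

Lemma par_gray (C : comNzRingType) K (f g : {ffun 'I_K -> bool}) :
  #|[set k | f k != g k]| = 1%N -> par C g = - par C f.
Proof.
move/eqP/cards1P=> [k0 hk].
have hk0 : f k0 != g k0.
  have : k0 \in [set k | f k != g k] by rewrite hk inE.
  by rewrite inE.
have e : forall k, k != k0 -> f k = g k.
  move=> k ne; apply/eqP; apply: contraNT ne => ne.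
  have : k \in [set k | f k != g k] by rewrite inE.
  by rewrite hk inE.
rewrite /par (bigD1 k0) //= [in RHS](bigD1 k0) //=.
rewrite (eq_bigr (fun k => sgn C (f k))); last by move=> k /e ->.
by move: hk0; rewrite /sgn; case: (f k0); case: (g k0) => //= _; rewrite ?mulN1r ?mul1r ?opprK.
Qed.

Lemma par_alt (C : comNzRingType) K (g : 'I_(2 ^ K) -> {ffun 'I_K -> bool}) :
  gray_labelling g -> forall n (hn : (n < 2 ^ K)%N),
  par C (g (Ordinal hn)) = par C (g (Ordinal (expn_gt0 2 K))) * (-1) ^+ n.
Proof.
move=> [_ hg]; elim=> [|n IH] hn.
  by rewrite expr0 mulr1; congr (par _ (g _)); apply: val_inj.
have hn' : (n < 2 ^ K)%N by apply: ltnW.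
rewrite (par_gray C (hg (Ordinal hn') (Ordinal hn) erefl)) IH exprS.
by rewrite mulrA mulrN1 mulNr.
Qed.
Lemma altsum (C : comNzRingType) (M : C) n :
  \sum_(u < n.*2) (-1)^+u * ((u.*2.+1)%:R - M) = - (n.*2)%:R.
Proof.
elim: n => [|n IH]; first by rewrite big_ord0 oppr0.
rewrite doubleS !big_ord_recr /= IH.
rewrite exprS -signr_odd odd_double expr0 mulr1 mulN1r.
rewrite -!muln2; ring.
Qed.

Lemma NI_le N : (NI N <= N)%N.
Proof. by rewrite /NI leq_subr. Qed.
Lemma NIQ N : (NI N + NQ N = N)%N.
Proof. rewrite /NI /NQ subnK //; have := odd_double_half N; lia. Qed.
Lemma NQ_le_NI N : (NQ N <= NI N)%N.
Proof. rewrite /NI /NQ; have := odd_double_half N; rewrite -muln2; lia. Qed.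

Definition Ipart N (b : {ffun 'I_N -> bool}) : {ffun 'I_(NI N) -> bool} :=
  [ffun k => b (widen_ord (NI_le N) k)].
Definition Qpart N (b : {ffun 'I_N -> bool}) : {ffun 'I_(NQ N) -> bool} :=
  [ffun k => b (cast_ord (NIQ N) (rshift (NI N) k))].

Lemma ibitsE N (i : 'I_(2 ^ N)) : ibits N i = Ipart (Bv i).
Proof. by apply/ffunP => k; rewrite !ffunE. Qed.
Lemma qbitsE N (i : 'I_(2 ^ N)) : qbits N i = Qpart (Bv i).
Proof. by apply/ffunP => k; rewrite !ffunE. Qed.

Lemma Ipart_flip N (q : 'I_N) b : (NI N <= q)%N -> Ipart (flip q b) = Ipart b.
Proof.
move=> hq; apply/ffunP => k; rewrite !ffunE; case: eqP => // /(congr1 val) /= e.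
by move: (ltn_ord k); rewrite e ltnNge hq.
Qed.
Lemma Qpart_flip N (p : 'I_N) b : (p < NI N)%N -> Qpart (flip p b) = Qpart b.
Proof.
move=> hp; apply/ffunP => k; rewrite !ffunE; case: eqP => // /(congr1 val) /= e.
by move: hp; rewrite -e ltnNge leq_addr.
Qed.

Definition Ext N (f : {ffun 'I_(NI N) -> bool}) : {ffun 'I_N -> bool} :=
  [ffun m => match split (cast_ord (esym (NIQ N)) m) with inl k => f k | inr _ => false end].

Lemma Ext_lo N f (k : 'I_(NI N)) (m : 'I_N) : val m = val k -> Ext f m = f k.
Proof.
move=> e; rewrite ffunE; case: splitP => [k' hk'|k' hk'].
  by congr (f _); apply: val_inj; move: hk'; rewrite /= e => ->.
move: (ltn_ord k) hk'; rewrite /= -e => h1 h2.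
have h1' : (nat_of_ord m < NI N)%N := h1.
by rewrite h2 ltnNge leq_addr in h1'.
Qed.
Lemma Ext_hi N f (m : 'I_N) : (NI N <= m)%N -> Ext f m = false.
Proof.
move=> hm; rewrite ffunE; case: splitP => [k' hk'|k' hk'] //.
move: (ltn_ord k') hk' => h1 h2.
have h1' : (nat_of_ord k' < NI N)%N := h1.
have hm' : (NI N <= nat_of_ord m)%N := hm.
move: h2; rewrite /= => h2; rewrite -h2 in h1'; by rewrite ltnNge hm' in h1'.
Qed.

Lemma card_bound N (S : {set 'I_N}) lo hi :
  (forall m : 'I_N, m \in S -> (lo <= m < hi)%N) -> (#|S| <= hi - lo)%N.
Proof.
move=> h; rewrite cardE -(size_map val) -(size_iota lo (hi - lo)).
apply: uniq_leq_size; first by rewrite (map_inj_uniq val_inj) enum_uniq.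
move=> x /mapP [m]; rewrite mem_enum => /h hm ->; rewrite mem_iota.
have hm' : (lo <= nat_of_ord m < hi)%N := hm.
move: hm'; rewrite /=; lia.
Qed.

Unset Implicit Arguments.

Theorem theorem2 (N : nat) (hN : (2 <= N)%N)
  (C : numClosedFieldType) (c : C) (hc : 0 < c)
  (gI : 'I_(2 ^ NI N) -> {ffun 'I_(NI N) -> bool})
  (gQ : 'I_(2 ^ NQ N) -> {ffun 'I_(NQ N) -> bool})
  (hgI : gray_labelling gI) (hgQ : gray_labelling gQ)
  (a : 'I_(2 ^ N) -> C)
  (ha : forall (i : 'I_(2 ^ N)) (u : 'I_(2 ^ NI N)) (v : 'I_(2 ^ NQ N)),
        gI u = ibits N i -> gQ v = qbits N i ->
        a i = c * ((u.*2.+1)%:R - (2 ^ NI N)%:R)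
              + 'i * (c * ((v.*2.+1)%:R - (2 ^ NQ N)%:R))) :
  (forall S : {set 'I_N},
     (exists2 n, n \in S & (n < NI N)%N) ->
     (exists2 n, n \in S & (NI N <= n)%N) ->
     forall y h : C, dbar (dist2 a y h) S = 0)
  /\
  ((exists S : {set 'I_N}, #|S| = NI N /\
      exists y h : C, dbar (dist2 a y h) S != 0)
   /\ (forall S : {set 'I_N}, (NI N < #|S|)%N ->
      forall y h : C, dbar (dist2 a y h) S = 0)).
Proof.
have hgI' := hgI.
move: hgI hgQ => [[gIi gIK gIiK] grayI] [[gQi gQK gQiK] grayQ].
case: (Bv_bij N) => Binv BK BinvK.
have bitB : forall b (n : 'I_N), bitn N n (Binv b) = b n.
  by move=> b n; rewrite -{2}(BinvK b) ffunE.
pose X b := c * (((gIi (Ipart b)).*2.+1)%:R - (2 ^ NI N)%:R).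
pose Y b := c * (((gQi (Qpart b)).*2.+1)%:R - (2 ^ NQ N)%:R).
have haB : forall b, a (Binv b) = X b + 'i * Y b.
  move=> b; apply: ha; first by rewrite gIiK ibitsE BinvK.
  by rewrite gQiK qbitsE BinvK.
have dbarE : forall d S, dbar d S =
    \sum_(b | cond S b) d (Binv b) * \prod_(m in S) sgn C (b m).
  move=> d S; rewrite /dbar (reindex Binv); last first.
    by exists (@Bv N) => b _; [rewrite BinvK | rewrite BK].
  apply: eq_big => [b|b _].
    by apply/forallP/forallP => hb m; have := hb m; rewrite bitB.
  by congr (_ * _); apply: eq_bigr => m _; rewrite bitB.
have cR : c^* = c by apply: geC0_conj; apply: ltW.
have Xc : forall b, (X b)^* = X b.
  by move=> b; rewrite /X rmorphM rmorphB !rmorph_nat; congr (_ * _).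
have Yc : forall b, (Y b)^* = Y b.
  by move=> b; rewrite /Y rmorphM rmorphB !rmorph_nat; congr (_ * _).
have decomp : forall y h b, dist2 a y h (Binv b) =
   (y - h * X b) * (y^* - h^* * X b) +
   (y * h^* * 'i * Y b - h * 'i * y^* * Y b - h * h^* * 'i ^+ 2 * Y b ^+ 2).
  have conjL : forall y h w : C, (y - h * w)^* = y^* - h^* * w^*.
    by move=> y h w; rewrite rmorphB rmorphM.
  have conjXY : forall x z : C, x^* = x -> z^* = z -> (x + 'i * z)^* = x - 'i * z.
    by move=> x z hx hz; rewrite rmorphD rmorphM /= hx hz conjCi mulNr.
  move=> y h b; rewrite /dist2 normCK haB conjL conjXY //.
  ring.
have P1 : forall S : {set 'I_N},
     (exists2 n, n \in S & (n < NI N)%N) ->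
     (exists2 n, n \in S & (NI N <= n)%N) ->
     forall y h : C, dbar (dist2 a y h) S = 0.
  move=> S [p pS hp] [q qS hq] y h; rewrite dbarE.
  under eq_bigr => b _ do rewrite decomp mulrDl.
  rewrite big_split /=.
  rewrite (@vanish C N S (fun b => (y - h * X b) * (y^* - h^* * X b)) q qS); last first.
    by move=> b; rewrite /X Ipart_flip.
  rewrite (@vanish C N S (fun b => y * h^* * 'i * Y b - h * 'i * y^* * Y b - h * h^* * 'i ^+ 2 * Y b ^+ 2) p pS); last first.
    by move=> b; rewrite /Y Qpart_flip.
  by rewrite addr0.
split=> //; split; last first.
  move=> S hS; apply: P1.
    case: (pickP (fun m : 'I_N => (m \in S) && (m < NI N)%N)) => [p /andP[]|hno].
      by exists p.
    suff : (#|S| <= N - NI N)%N.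
      have := NQ_le_NI N; have := NIQ N; lia.
    apply: card_bound => m mS; have := hno m; rewrite mS /= => /negbT; rewrite -leqNgt => ->.
    exact: ltn_ord.
  case: (pickP (fun m : 'I_N => (m \in S) && (NI N <= m)%N)) => [q /andP[]|hno].
    by exists q.
  suff : (#|S| <= NI N - 0)%N by rewrite subn0 leqNgt hS.
  apply: card_bound => m mS; have := hno m; rewrite mS /= => /negbT; rewrite -ltnNge => ->.
  by [].
pose S0 := [set widen_ord (NI_le N) k | k : 'I_(NI N)].
have memS0 : forall m : 'I_N, (m \in S0) = (m < NI N)%N.
  move=> m; apply/imsetP/idP => [[k _ ->] | hm]; first by case: k.
  exists (Ordinal hm) => //.
  exact: ord_inj.
have cS0 : #|S0| = NI N.
  rewrite card_imset; first by rewrite card_ord.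
  by move=> x z /(congr1 val) /= /ord_inj.
exists S0; split => //.
have T0 : \sum_(b | cond S0 b) X b * \prod_(m in S0) sgn C (b m) != 0.
  have IE : forall f, Ipart (@Ext N f) = f.
    by move=> f; apply/ffunP => k; rewrite ffunE (Ext_lo f (k:=k)).
  rewrite (reindex (@Ext N)); last first.
    exists (@Ipart N) => [f _ | b]; first exact: IE.
    rewrite inE => hb; apply/ffunP => m; case: (ltnP m (NI N)) => hm.
      by rewrite (Ext_lo _ (k := Ordinal hm)) // ffunE; congr (b _); apply: ord_inj.
    rewrite Ext_hi //; have := forallP hb m; rewrite memS0 ltnNge hm /=.
    by move/negbTE ->.
  rewrite (eq_bigl xpredT); last first.
    move=> f; apply/forallP => m; apply/implyP; rewrite memS0 -leqNgt => hm.
    by rewrite Ext_hi.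
  have hprod : forall f, \prod_(m in S0) sgn C (@Ext N f m) = par C f.
    move=> f; rewrite big_imset /=; last by move=> x z _ _ /(congr1 val) /= /ord_inj.
    by apply: eq_big => // k _; rewrite (Ext_lo f (k:=k)).
  under eq_bigr => f _ do rewrite hprod /X IE.
  rewrite (reindex gI); last by exists gIi => u _; [rewrite gIK | rewrite gIiK].
  pose p0 := par C (gI (Ordinal (expn_gt0 2 (NI N)))).
  have hpar : forall u, par C (gI u) = p0 * (-1) ^+ u.
    move=> u; rewrite -(par_alt C hgI' (ltn_ord u)); congr (par C (gI _)).
    exact: ord_inj.
  under eq_bigr => u _ do rewrite gIK hpar.
  rewrite (eq_bigr (fun u : 'I_(2 ^ NI N) => c * p0 * ((-1) ^+ u * ((u.*2.+1)%:R - (2 ^ NI N)%:R)))); last first.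
    by move=> u _; ring.
  rewrite -mulr_sumr.
  rewrite -(big_mkord xpredT (fun u => (-1) ^+ u * ((u.*2.+1)%:R - (2 ^ NI N)%:R : C))).
  have hK : (2 ^ NI N = (2 ^ (NI N).-1).*2)%N.
    have : (0 < NI N)%N by rewrite /NI; have := odd_double_half N; rewrite -muln2; lia.
    by case: (NI N) => // K _; rewrite expnS mul2n.
  set M := ((2 ^ NI N)%:R : C).
  rewrite hK big_mkord altsum.
  rewrite !mulf_neq0 //; first by rewrite gt_eqF.
    apply/prodf_neq0 => k _; rewrite /sgn; case: (gI _ k) => //=.
      exact: oner_neq0.
    by rewrite oppr_eq0 oner_eq0.
  by rewrite oppr_eq0 pnatr_eq0 double_eq0 expn_eq0.
case: (eqVneq (dbar (dist2 a 1 1) S0) 0) => [z1|]; last by exists 1, 1.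
case: (eqVneq (dbar (dist2 a (-1) 1) S0) 0) => [z2|]; last by exists (-1), 1.
exfalso; move: T0; apply/negP; rewrite negbK.
have : dbar (dist2 a 1 1) S0 - dbar (dist2 a (-1) 1) S0 =
    -4 * \sum_(b | cond S0 b) X b * \prod_(m in S0) sgn C (b m).
  rewrite !dbarE -sumrB mulr_sumr; apply: eq_bigr => b _; rewrite !decomp.
  rewrite rmorphN rmorph1; ring.
rewrite z1 z2 subrr => /esym /eqP; rewrite mulf_eq0 => /orP [|//].
by rewrite oppr_eq0 pnatr_eq0.
Qed.
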